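(* Let $p,q\in(0,1/2)$ with $\frac{\log p}{\log q}\notin\mathbb Q$. Then the topological (Kuratowski) limit $\lim_{t\to+\infty}tK_{pq}$ exists and equals $[0,+\infty)$, where $tK_{pq}=\{tx:x\in K_{pq}\}$.
   Context: For $p,q\in(0,1/2)$ let $S_1(x)=px$, $S_2(x)=qx$, $S_3(x)=px+1-p$, $S_4(x)=qx+1-q$, and let $K_{pq}$ be the attractor of $\{S_1,S_2,S_3,S_4\}$, i.e. the unique nonempty compact $K\subset\mathbb R$ with $K=\bigcup_{i=1}^4S_i(K)$. *)

(* Defs.v *)
From Stdlib Require Import Reals QArith.
Open Scope R_scope.

Definition S1 (p : R) (x : R) : R := p * x.
Definition S2 (q : R) (x : R) : R := q * x.
Definition S3 (p : R) (x : R) : R := p * x + 1 - p.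
Definition S4 (q : R) (x : R) : R := q * x + 1 - q.

(* K is the attractor of {S1,S2,S3,S4}: a nonempty compact set with
   K = S1(K) u S2(K) u S3(K) u S4(K).  (Such K exists and is unique by
   Hutchinson's theorem.) [compact] is Stdlib's open-cover compactness. *)
Definition is_attractor (p q : R) (K : R -> Prop) : Prop :=
  (exists x, K x) /\ compact K /\
  forall x, K x <->
    exists y, K y /\ (x = S1 p y \/ x = S2 q y \/ x = S3 p y \/ x = S4 q y).

Definition scale_set (t : R) (K : R -> Prop) : R -> Prop :=
  fun x => exists y, K y /\ x = t * y.

Definition Kliminf (A : R -> R -> Prop) : R -> Prop :=
  fun x => forall eps, 0 < eps -> exists T, forall t, T < t ->
    exists y, A t y /\ Rabs (y - x) < eps.

Definition Klimsup (A : R -> R -> Prop) : R -> Prop :=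
  fun x => forall eps, 0 < eps -> forall T, exists t, T < t /\
    exists y, A t y /\ Rabs (y - x) < eps.

Definition Kuratowski_limit_is (A : R -> R -> Prop) (L : R -> Prop) : Prop :=
  (forall x, Kliminf A x <-> L x) /\ (forall x, Klimsup A x <-> L x).

(* Main.v *)
Require Import Defs.
From Stdlib Require Import Reals QArith Lra ZArith Lia Classical.
Open Scope R_scope.

Lemma nat_floor (r : R) : 0 <= r -> exists j : nat, INR j <= r < INR j + 1.
Proof.
  intros Hr. destruct (archimed r) as [H1 H2].
  assert (Hz : (1 <= up r)%Z).
  { apply le_IZR. assert (IZR (up r) > 0) by lra.
    assert (0 < up r)%Z by (apply lt_IZR; lra). apply IZR_le. lia. }
  exists (Z.to_nat (up r - 1)). rewrite INR_IZR_INZ, Z2Nat.id by lia.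
  rewrite minus_IZR. simpl. lra.
Qed.

Lemma floor_div (r g : R) : 0 <= r -> 0 < g ->
  exists j : nat, INR j * g <= r < (INR j + 1) * g.
Proof.
  intros Hr Hg. destruct (nat_floor (r / g)) as [j [Hj1 Hj2]].
  { unfold Rdiv. apply Rmult_le_pos; [lra|]. left. apply Rinv_0_lt_compat; lra. }
  exists j. split.
  - apply Rmult_le_reg_r with (/ g). apply Rinv_0_lt_compat; lra.
    rewrite Rmult_assoc, Rinv_r by lra. unfold Rdiv in Hj1. lra.
  - apply Rmult_lt_reg_r with (/ g). apply Rinv_0_lt_compat; lra.
    rewrite Rmult_assoc, Rinv_r by lra. unfold Rdiv in Hj2. lra.
Qed.

Lemma cover (a b d : R) (K L : nat) : 0 < a -> 0 < b -> (0 < L)%nat ->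
  0 < INR K * a - INR L * b < d ->
  exists S, forall s, S <= s -> exists m n : nat,
    0 <= s - INR m * a - INR n * b < d.
Proof.
  intros Ha Hb HL [Hg1 Hg2]. set (g := INR K * a - INR L * b) in *.
  assert (HLb : 0 < INR L * b).
  { apply Rmult_lt_0_compat; auto. apply lt_0_INR; auto. }
  destruct (floor_div (INR L * b) g) as [M0 [_ HM0]]; try lra.
  exists ((INR M0 + 1) * (INR L * b)). intros s Hs.
  destruct (floor_div s (INR L * b)) as [M [HM1 HM2]]; auto.
  { assert (0 <= INR M0) by apply pos_INR. nra. }
  assert (HMM : (M0 < M)%nat).
  { apply INR_lt. apply Rmult_lt_reg_r with (INR L * b); auto. nra. }
  set (r := s - INR M * (INR L * b)).
  destruct (floor_div r g) as [j [Hj1 Hj2]]; try (unfold r; lra).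
  assert (HjM : (j <= M)%nat).
  { assert (INR M0 + 1 <= INR M) by (rewrite <- S_INR; apply le_INR; lia).
    assert (INR j * g < (INR M0 + 1) * g) by (unfold r in *; nra).
    assert (INR j < INR (S M0)) by (rewrite S_INR; apply Rmult_lt_reg_r with g; lra).
    apply INR_lt in H1. lia. }
  exists (j * K)%nat, ((M - j) * L)%nat.
  rewrite !mult_INR, minus_INR by auto. unfold r, g in *. split; nra.
Qed.

Lemma int_floor (r : R) : exists c : Z, IZR c <= r < IZR c + 1.
Proof.
  destruct (archimed r) as [H1 H2]. exists (up r - 1)%Z.
  rewrite minus_IZR. simpl. lra.
Qed.

Lemma dense (a b d : R) : 0 < a -> 0 < b -> 0 < d ->
  ~ (exists x y : Z, (0 < y)%Z /\ a * IZR y = b * IZR x) ->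
  exists k l : Z, 0 < IZR k * a + IZR l * b < d.
Proof.
  intros Ha Hb Hd Hirr. apply NNPP. intro Hn.
  assert (H : forall k l : Z, 0 < IZR k * a + IZR l * b -> d <= IZR k * a + IZR l * b).
  { intros k l Hp. apply Rnot_lt_le. intro. apply Hn. exists k, l. lra. }
  clear Hn.
  set (E := fun r => exists k l : Z, 0 < IZR k * a + IZR l * b /\ r = - (IZR k * a + IZR l * b)).
  destruct (completeness E) as [m [Hub Hlub]].
  { exists 0. intros r [k [l [H1 H2]]]. lra. }
  { exists (-a), 1%Z, 0%Z. simpl. split; lra. }
  assert (Hex : exists k0 l0 : Z, 0 < IZR k0 * a + IZR l0 * b /\
             IZR k0 * a + IZR l0 * b < - m + d).
  { apply NNPP. intro Hn.
    assert (m <= m - d); [|lra]. apply Hlub. intros r [k [l [H1 H2]]].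
    apply Rnot_lt_le. intro. apply Hn. exists k, l. lra. }
  destruct Hex as [k0 [l0 [Hg0 Hg1]]].
  set (g := IZR k0 * a + IZR l0 * b) in *.
  assert (Hmin : forall k l : Z, 0 < IZR k * a + IZR l * b -> g <= IZR k * a + IZR l * b).
  { intros k l Hp. apply Rnot_lt_le. intro Hlt.
    assert (-(IZR k * a + IZR l * b) <= m) by (apply Hub; exists k, l; split; auto).
    assert (Hd2 := H (k0 - k)%Z (l0 - l)%Z). rewrite !minus_IZR in Hd2.
    unfold g in *. lra. }
  assert (Hmul : forall x : R, 0 < x -> (exists k l : Z, x = IZR k * a + IZR l * b) ->
            exists c : Z, (0 < c)%Z /\ x = IZR c * g).
  { intros x Hx [k [l Hkl]]. destruct (int_floor (x / g)) as [c [Hc1 Hc2]].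
    assert (Hc3 : IZR c * g <= x) by (apply Rmult_le_reg_r with (/g);
       [apply Rinv_0_lt_compat; lra | rewrite Rmult_assoc, Rinv_r by lra;
        unfold Rdiv in Hc1; lra]).
    assert (Hc4 : x < (IZR c + 1) * g) by (apply Rmult_lt_reg_r with (/g);
       [apply Rinv_0_lt_compat; lra | rewrite Rmult_assoc, Rinv_r by lra;
        unfold Rdiv in Hc2; lra]).
    assert (Hr : x - IZR c * g = 0).
    { destruct (Req_dec (x - IZR c * g) 0) as [|Hne]; auto. exfalso.
      assert (Hm := Hmin (k - c * k0)%Z (l - c * l0)%Z).
      rewrite !minus_IZR, !mult_IZR in Hm. unfold g in *.
      assert (0 < IZR k * a + IZR l * b - IZR c * (IZR k0 * a + IZR l0 * b)) by lra.
      assert (IZR k0 * a + IZR l0 * b <=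
        (IZR k - IZR c * IZR k0) * a + (IZR l - IZR c * IZR l0) * b) by (apply Hm; nra).
      nra. }
    exists c. split; [|lra]. apply lt_IZR.
    destruct (Rlt_or_le 0 (IZR c)) as [|Hle]; auto. nra. }
  destruct (Hmul a Ha) as [ca [Hca Ea]]. { exists 1%Z, 0%Z. simpl. ring. }
  destruct (Hmul b Hb) as [cb [Hcb Eb]]. { exists 0%Z, 1%Z. simpl. ring. }
  apply Hirr. exists ca, cb. split; auto. rewrite Ea, Eb. ring.
Qed.

Lemma INR_toZ (z : Z) : (0 <= z)%Z -> INR (Z.to_nat z) = IZR z.
Proof. intros. rewrite INR_IZR_INZ, Z2Nat.id; auto. Qed.

Lemma key (a b d : R) : 0 < a -> 0 < b -> 0 < d ->
  ~ (exists x y : Z, (0 < y)%Z /\ a * IZR y = b * IZR x) ->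
  exists S, forall s, S <= s -> exists m n : nat,
    0 <= s - INR m * a - INR n * b < d.
Proof.
  intros Ha Hb Hd Hirr.
  destruct (dense a b (Rmin d (Rmin a b)) Ha Hb) as [k [l [H1 H2]]]; auto.
  { repeat apply Rmin_glb_lt; auto. }
  assert (Hm1 := Rmin_l d (Rmin a b)). assert (Hm2 := Rmin_r d (Rmin a b)).
  assert (Hm3 := Rmin_l a b). assert (Hm4 := Rmin_r a b).
  destruct (Z_lt_le_dec 0 k) as [Hk|Hk]; destruct (Z_lt_le_dec l 0) as [Hl|Hl].
  - destruct (cover a b d (Z.to_nat k) (Z.to_nat (- l))) as [S HS]; auto. lia.
    rewrite !INR_toZ by lia. rewrite opp_IZR. lra.
    exists S; exact HS.
  - exfalso. assert (1 <= IZR k) by (apply IZR_le; lia).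
    assert (0 <= IZR l) by (apply IZR_le; lia). nra.
  - exfalso. assert (IZR k <= 0) by (apply IZR_le; lia).
    assert (IZR l <= 0) by (apply IZR_le; lia). nra.
  - assert (Hl' : (0 < l)%Z).
    { destruct (Z.eq_dec l 0) as [->|]; [|lia]. exfalso.
      assert (IZR k <= 0) by (apply IZR_le; lia). simpl in H1. nra. }
    destruct (Z.eq_dec k 0) as [->|Hk0].
    { exfalso. assert (1 <= IZR l) by (apply IZR_le; lia). simpl in H2. nra. }
    destruct (cover b a d (Z.to_nat l) (Z.to_nat (- k))) as [S HS]; auto. lia.
    rewrite !INR_toZ by lia. rewrite opp_IZR. lra.
    exists S. intros s Hs. destruct (HS s Hs) as [m [n Hmn]]. exists n, m. lra.
Qed.

Lemma K_nonneg (p q : R) (K : R -> Prop) : 0 < p < 1/2 -> 0 < q < 1/2 ->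
  is_attractor p q K -> forall y, K y -> 0 <= y.
Proof.
  intros Hp Hq [Hne [Hc Hfix]].
  destruct (compact_P1 K Hc) as [m0 [M0 HB]].
  set (E := fun r => K (- r)).
  destruct (completeness E) as [M [Hub Hlub]].
  { exists (- m0). intros r Hr. unfold E in Hr. apply HB in Hr. lra. }
  { destruct Hne as [y Hy]. exists (- y). unfold E. rewrite Ropp_involutive. auto. }
  assert (Hlow : forall y, K y -> - M <= y).
  { intros y Hy. assert (- y <= M) by (apply Hub; unfold E; rewrite Ropp_involutive; auto). lra. }
  intros y Hy. apply Rnot_lt_le. intro Hneg.
  assert (Hg : - M < 0) by (specialize (Hlow y Hy); lra).
  set (g := - M) in *.
  assert (Hc2 : forall z, K z -> Rmin (p * g) (q * g) <= z).
  { intros z Hz. apply Hfix in Hz. destruct Hz as [w [Hw Hz]].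
    assert (g <= w) by (apply Hlow; auto).
    assert (Hm1 := Rmin_l (p*g) (q*g)). assert (Hm2 := Rmin_r (p*g) (q*g)).
    unfold S1, S2, S3, S4 in Hz. destruct Hz as [ -> | [ -> | [ -> | -> ] ] ]; nra. }
  assert (M <= - Rmin (p * g) (q * g)).
  { apply Hlub. intros r Hr. unfold E in Hr. apply Hc2 in Hr. lra. }
  assert (Hm1 := Rmin_l (p*g) (q*g)). assert (Hm2 := Rmin_r (p*g) (q*g)).
  destruct (Rle_dec (p*g) (q*g)).
  - rewrite Rmin_left in H by auto. unfold g in *. nra.
  - rewrite Rmin_right in H by lra. unfold g in *. nra.
Qed.

Lemma K_scale (p q : R) (K : R -> Prop) : is_attractor p q K ->
  forall z, K z -> forall m n : nat, K (p ^ m * q ^ n * z).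
Proof.
  intros [_ [_ Hfix]] z Hz m n. induction m as [|m IH].
  - induction n as [|n IH]. simpl. rewrite !Rmult_1_l. auto.
    simpl. apply Hfix. exists (1 * q ^ n * z). split; auto. right; left.
    unfold S2. ring.
  - simpl. apply Hfix. exists (p ^ m * q ^ n * z). split; auto. left.
    unfold S1. ring.
Qed.

Lemma limsup_nonneg (K : R -> Prop) (x : R) : (forall y, K y -> 0 <= y) ->
  Klimsup (fun t => scale_set t K) x -> 0 <= x.
Proof.
  intros HK H. apply Rnot_lt_le. intro Hx.
  destruct (H (- x) ltac:(lra) 0) as [t [Ht [y [[y' [Hy' ->]] Habs]]]].
  apply Rabs_def2 in Habs. specialize (HK y' Hy'). nra.
Qed.

Lemma liminf_pos (p q : R) (K : R -> Prop) : 0 < p < 1/2 -> 0 < q < 1/2 ->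
  ~ (exists r : Q, ln p / ln q = Q2R r) ->
  is_attractor p q K -> forall x, 0 < x -> Kliminf (fun t => scale_set t K) x.
Proof.
  intros Hp Hq Hirr HA x Hx eps Heps.
  assert (HK0 := K_nonneg p q K Hp Hq HA).
  pose proof HA as HA2. destruct HA2 as [[y0 Hy0] [Hc Hfix]].
  assert (Hz0 : K (S3 p y0)) by (apply Hfix; exists y0; auto).
  set (z0 := S3 p y0) in *.
  assert (Hz0p : 0 < z0) by (unfold z0, S3; specialize (HK0 y0 Hy0); nra).
  assert (Hlp : ln p < 0) by (rewrite <- ln_1; apply ln_increasing; lra).
  assert (Hlq : ln q < 0) by (rewrite <- ln_1; apply ln_increasing; lra).
  set (a := - ln p). set (b := - ln q).
  assert (Hirr' : ~ (exists x y : Z, (0 < y)%Z /\ a * IZR y = b * IZR x)).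
  { intros [u [v [Hv Huv]]]. apply Hirr. exists (Qmake u (Z.to_pos v)).
    unfold Q2R. simpl. rewrite Z2Pos.id by auto.
    assert (IZR v <> 0) by (apply not_0_IZR; lia).
    unfold a, b in Huv. field_simplify_eq; try nra; try lra; auto. }
  assert (Hd : 0 < ln (x + eps) - ln x) by (assert (ln x < ln (x + eps)) by (apply ln_increasing; lra); lra).
  destruct (key a b _ ltac:(unfold a; lra) ltac:(unfold b; lra) Hd Hirr') as [S HS].
  exists (exp (S + ln x - ln z0)). intros t Ht.
  assert (Htp : 0 < t) by (pose proof (exp_pos (S + ln x - ln z0)); lra).
  assert (Hlt : S + ln x - ln z0 < ln t).
  { rewrite <- (ln_exp (S + ln x - ln z0)). apply ln_increasing; auto. apply exp_pos. }
  destruct (HS (ln t + ln z0 - ln x) ltac:(lra)) as [m [n Hmn]].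
  exists (t * (p ^ m * q ^ n * z0)). split.
  { exists (p ^ m * q ^ n * z0). split; auto. eapply K_scale; eauto. }
  set (v := t * (p ^ m * q ^ n * z0)).
  assert (Hpm : 0 < p ^ m) by (apply pow_lt; lra).
  assert (Hqn : 0 < q ^ n) by (apply pow_lt; lra).
  assert (Hv : 0 < v) by (unfold v; repeat apply Rmult_lt_0_compat; auto).
  assert (Hlv : ln v = ln t + INR m * ln p + INR n * ln q + ln z0).
  { unfold v. rewrite !ln_mult by (repeat apply Rmult_lt_0_compat; auto).
    rewrite !ln_pow by lra. ring. }
  assert (x <= v).
  { apply Rnot_lt_le. intro. assert (ln v < ln x) by (apply ln_increasing; auto).
    unfold a, b in Hmn. lra. }
  assert (v < x + eps).
  { apply ln_lt_inv; auto. lra. unfold a, b in Hmn. lra. }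
  apply Rabs_def1; lra.
Qed.

Theorem theorem7 (p q : R) (K : R -> Prop) :
  0 < p < 1/2 -> 0 < q < 1/2 ->
  ~ (exists r : Q, ln p / ln q = Q2R r) ->
  is_attractor p q K ->
  Kuratowski_limit_is (fun t => scale_set t K) (fun x => 0 <= x).
Proof.
  intros Hp Hq Hirr HA.
  assert (HK0 := K_nonneg p q K Hp Hq HA).
  assert (Hinf : forall x, 0 <= x -> Kliminf (fun t => scale_set t K) x).
  { intros x Hx eps Heps.
    destruct (Rlt_le_dec 0 x) as [Hxp|Hx0].
    - apply (liminf_pos p q K Hp Hq Hirr HA x Hxp eps Heps).
    - destruct (liminf_pos p q K Hp Hq Hirr HA (eps/2) ltac:(lra) (eps/2) ltac:(lra))
        as [T HT].
      exists T. intros t Ht. destruct (HT t Ht) as [y [Hy Habs]].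
      exists y. split; auto. apply Rabs_def2 in Habs. apply Rabs_def1; lra. }
  assert (Hinfsup : forall x, Kliminf (fun t => scale_set t K) x ->
                         Klimsup (fun t => scale_set t K) x).
  { intros x H eps Heps T0. destruct (H eps Heps) as [T HT].
    exists (Rmax T T0 + 1). split. pose proof (Rmax_r T T0); lra.
    apply HT. pose proof (Rmax_l T T0); lra. }
  split; intro x; split.
  - intro H. apply (limsup_nonneg K x HK0). auto.
  - apply Hinf.
  - apply (limsup_nonneg K x HK0).
  - intro. apply Hinfsup, Hinf; auto.
Qed.
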